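(* Let $n\ge 3$ and let $H:=\sum_{1\le i\ne j\le n}[X_{ij}(R),X_{ji}(R)]\subseteq \mathfrak{stl}_n(R)$ (the $K$-span of all brackets $[X_{ij}(a),X_{ji}(b)]$, $a,b\in R$). Then $H$ is a subalgebra of $\mathfrak{stl}_n(R)$ containing the center of $\mathfrak{stl}_n(R)$, $[H,X_{ij}(R)]\subseteq X_{ij}(R)$ for all $i\neq j$, and $$\mathfrak{stl}_n(R)=H\oplus\bigoplus_{1\le i\ne j\le n}X_{ij}(R)$$ as $K$-modules, where $X_{ij}(R)=\{X_{ij}(a):a\in R\}$.
   Context: $K$ is a unital commutative ring and $R$ is a unital associative $K$-algebra which is free as a $K$-module with a $K$-basis containing $1$. A Leibniz algebra over $K$ is a $K$-module $L$ with a $K$-bilinear bracket satisfying $[x,[y,z]]=[[x,y],z]-[[x,z],y]$ for all $x,y,z\in L$. The center of $L$ is $\{z\in L: [z,L]=[L,z]=0\}$. For $n\ge 3$, the Steinberg Leibniz algebra $\mathfrak{stl}_n(R)$ is the Leibniz algebra over $K$ generated by symbols $X_{ij}(a)$, $a\in R$, $1\le i\ne j\le n$, subject to: $X_{ij}(k_1a+k_2b)=k_1X_{ij}(a)+k_2X_{ij}(b)$ ($k_1,k_2\in K$); $[X_{ij}(a),X_{jk}(b)]=X_{ik}(ab)$ and $[X_{ij}(a),X_{ki}(b)]=-X_{kj}(ba)$ for distinct $i,j,k$; $[X_{ij}(a),X_{kl}(b)]=0$ for $j\ne k$, $i\ne l$. *)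

(* Defs.v *)
From HB Require Import structures.
From mathcomp Require Import all_boot all_order all_algebra.
Set Implicit Arguments.
Unset Strict Implicit.
Unset Printing Implicit Defensive.
Import GRing.Theory.
Local Open Scope ring_scope.

Definition free_with_basis_one (K : comPzRingType) (R : algType K) : Prop :=
  exists B : R -> Prop,
    B 1 /\
    (forall (s : seq R) (c : R -> K), uniq s -> (forall x, x \in s -> B x) ->
       \sum_(x <- s) c x *: x = 0 -> forall x, x \in s -> c x = 0) /\
    (forall r : R, exists (s : seq R) (c : R -> K),
       (forall x, x \in s -> B x) /\ r = \sum_(x <- s) c x *: x).

Definition bilinear_bracket (K : comPzRingType) (L : lmodType K) (br : L -> L -> L) : Prop :=
  (forall (k : K) (x y z : L), br (k *: x + y) z = k *: br x z + br y z) /\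
  (forall (k : K) (x y z : L), br z (k *: x + y) = k *: br z x + br z y).

Definition leibniz_algebra (K : comPzRingType) (L : lmodType K) (br : L -> L -> L) : Prop :=
  bilinear_bracket br /\
  (forall x y z : L, br x (br y z) = br (br x y) z - br (br x z) y).

Definition leibniz_hom (K : comPzRingType) (L M : lmodType K)
    (brL : L -> L -> L) (brM : M -> M -> M) (f : L -> M) : Prop :=
  (forall (k : K) (x y : L), f (k *: x + y) = k *: f x + f y) /\
  (forall x y : L, f (brL x y) = brM (f x) (f y)).

(* Steinberg relations for a family X_ij(a), i <> j (values at i = j are irrelevant). *)
Definition steinberg_rel (K : comPzRingType) (R : algType K) (n : nat)
    (L : lmodType K) (br : L -> L -> L) (X : 'I_n -> 'I_n -> R -> L) : Prop :=
  (forall (i j : 'I_n) (k1 k2 : K) (a b : R), i != j ->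
     X i j (k1 *: a + k2 *: b) = k1 *: X i j a + k2 *: X i j b) /\
  (forall (i j k : 'I_n) (a b : R), i != j -> j != k -> i != k ->
     br (X i j a) (X j k b) = X i k (a * b)) /\
  (forall (i j k : 'I_n) (a b : R), i != j -> j != k -> i != k ->
     br (X i j a) (X k i b) = - X k j (b * a)) /\
  (forall (i j k l : 'I_n) (a b : R), i != j -> k != l -> j != k -> i != l ->
     br (X i j a) (X k l b) = 0).

(* (L, br, X) is the Steinberg Leibniz algebra stl_n(R): the Leibniz K-algebra
   presented by generators X_ij(a) (i <> j) and the Steinberg relations, given
   by its universal property. *)
Definition is_stl (K : comPzRingType) (R : algType K) (n : nat)
    (L : lmodType K) (br : L -> L -> L) (X : 'I_n -> 'I_n -> R -> L) : Prop :=
  leibniz_algebra br /\ steinberg_rel br X /\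
  forall (M : lmodType K) (brM : M -> M -> M) (Y : 'I_n -> 'I_n -> R -> M),
    leibniz_algebra brM -> steinberg_rel brM Y ->
    (exists f : L -> M, leibniz_hom br brM f /\
        forall (i j : 'I_n) (a : R), i != j -> f (X i j a) = Y i j a) /\
    (forall f g : L -> M, leibniz_hom br brM f -> leibniz_hom br brM g ->
        (forall (i j : 'I_n) (a : R), i != j -> f (X i j a) = Y i j a) ->
        (forall (i j : 'I_n) (a : R), i != j -> g (X i j a) = Y i j a) ->
        forall x, f x = g x).

Definition in_H (K : comPzRingType) (R : algType K) (n : nat)
    (L : lmodType K) (br : L -> L -> L) (X : 'I_n -> 'I_n -> R -> L) (x : L) : Prop :=
  exists s : seq (K * ('I_n * 'I_n) * (R * R)),
    (forall t, t \in s -> t.1.2.1 != t.1.2.2) /\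
    x = \sum_(t <- s) t.1.1 *: br (X t.1.2.1 t.1.2.2 t.2.1) (X t.1.2.2 t.1.2.1 t.2.2).

Definition in_center (K : comPzRingType) (L : lmodType K) (br : L -> L -> L) (z : L) : Prop :=
  forall y : L, br z y = 0 /\ br y z = 0.

(* Main.v *)
Require Import Defs.
From HB Require Import structures.
From mathcomp Require Import all_boot all_order all_algebra zify.
From Stdlib Require Import ClassicalEpsilon.
Import GRing.Theory.
Local Open Scope ring_scope.

Lemma jz (V : zmodType) (a b c d e f : V) :
  a - b - (c - d) = (a - e - (f - d)) - (b - f - (e - c)).
Proof.
rewrite !opprB !addrA.
rewrite (addrAC (a - e + d) (-f) e) (addrAC (a - e) d e) subrK (addrAC (a+d-f) (-c) f) subrK.
by rewrite (addrAC a (-b) d) (addrAC (a + d) (-b) (-c)).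
Qed.


Section Mat.
Variables (K : comPzRingType) (R : algType K) (n : nat).
Local Notation Mf := {ffun 'I_n * 'I_n -> R}.
Definition tom (A : Mf) : 'M[R]_n := \matrix_(i, j) A (i, j).
Definition fromm (M : 'M[R]_n) : Mf := [ffun p => M p.1 p.2].
Definition brM (A B : Mf) : Mf := fromm (tom A *m tom B - tom B *m tom A).
Definition Ym (i j : 'I_n) (a : R) : Mf := [ffun p => if p == (i, j) then a else 0].

Lemma tomK M : tom (fromm M) = M.
Proof. by apply/matrixP => i j; rewrite !mxE ffunE. Qed.
Lemma frommB M N : fromm (M - N) = fromm M - fromm N.
Proof. apply/ffunP => p; rewrite !ffunE !mxE. reflexivity. Qed.

Lemma prodY_l A r s c p q :
  (tom A *m tom (Ym r s c)) p q = if q == s then A (p, r) * c else 0.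
Proof.
rewrite mxE (bigD1 r) //= big1 ?addr0; last by move=> l hl; rewrite !mxE ffunE xpair_eqE (negbTE hl) mulr0.
by rewrite !mxE ffunE xpair_eqE eqxx /=; case: eqP; rewrite ?mulr0.
Qed.
Lemma prodY_r A r s c p q :
  (tom (Ym r s c) *m tom A) p q = if p == r then c * A (s, q) else 0.
Proof.
rewrite mxE (bigD1 s) //= big1 ?addr0; last by move=> l hl; rewrite !mxE ffunE xpair_eqE (negbTE hl) andbF mul0r.
by rewrite !mxE ffunE xpair_eqE eqxx andbT; case: eqP; rewrite ?mul0r.
Qed.
Lemma brME A B p : brM A B p = (tom A *m tom B - tom B *m tom A) p.1 p.2.
Proof. by rewrite ffunE. Qed.

Lemma brME2 A B p : brM A B p =
  \sum_l A (p.1, l) * B (l, p.2) - \sum_l B (p.1, l) * A (l, p.2).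
Proof. by rewrite ffunE !mxE; congr (_ - _); apply: eq_bigr => l _; rewrite !mxE. Qed.
Lemma ffunkD k (A B : Mf) p : (k *: A + B) p = k *: A p + B p.
Proof. by rewrite !ffunE. Qed.

Lemma leibM : leibniz_algebra brM.
Proof.
split. split.
- move=> k x y z; apply/ffunP => p; rewrite ffunkD !brME2.
  under eq_bigr => l _ do rewrite ffunkD mulrDl -scalerAl.
  under [X in _ - X]eq_bigr => l _ do rewrite ffunkD mulrDr -scalerAr.
  rewrite !big_split /= -!scaler_sumr scalerBr opprD addrACA //.
- move=> k x y z; apply/ffunP => p; rewrite ffunkD !brME2.
  under eq_bigr => l _ do rewrite ffunkD mulrDr -scalerAr.
  under [X in _ - X]eq_bigr => l _ do rewrite ffunkD mulrDl -scalerAl.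
  rewrite !big_split /= -!scaler_sumr scalerBr opprD addrACA //.
move=> x y z; rewrite /brM !tomK -frommB; congr fromm.
rewrite !mulmxBl !mulmxBr !mulmxA; exact: jz.
Qed.
Lemma subE (M N : 'M[R]_n) i j : (M - N) i j = M i j - N i j.
Proof. by rewrite !mxE. Qed.

Lemma stM : steinberg_rel brM Ym.
Proof.
split.
  move=> i j k1 k2 a b ij; apply/ffunP => p; rewrite !ffunE.
  by case: ifP; rewrite ?scaler0 ?addr0.
split.
  move=> i j k a b ij jk ik; apply/ffunP => -[p q].
  rewrite brME /= subE prodY_l prodY_r !ffunE !xpair_eqE eqxx andbT (eq_sym k i) (negbTE ik) /= mulr0.
  by rewrite if_same subr0; case: (p == i); case: (q == k); rewrite /= ?mul0r.
split.
  move=> i j k a b ij jk ik; apply/ffunP => -[p q].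
  rewrite brME /= subE prodY_l prodY_r !ffunE !xpair_eqE.
  rewrite eqxx (eq_sym k j) (negbTE jk) andbF mul0r if_same sub0r /=.
  by case: (p == k); case: (q == j); rewrite /= ?mulr0 ?oppr0.
move=> i j k l a b ij kl jk il; apply/ffunP => -[p q].
rewrite brME /= subE prodY_l prodY_r !ffunE !xpair_eqE.
by rewrite (eq_sym k j) (negbTE jk) (eq_sym l i) (negbTE il) !andbF mul0r mulr0 !if_same subr0.
Qed.
End Mat.

Section Stl.

Variables (K : comPzRingType) (R : algType K) (n : nat) (L : lmodType K)
  (br : L -> L -> L) (X : 'I_n -> 'I_n -> R -> L).
Hypothesis Hn : (3 <= n)%N.
Hypothesis Hstl : is_stl br X.

Lemma Hleib : leibniz_algebra br. Proof. by case: Hstl. Qed.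
Lemma Hst : steinberg_rel br X. Proof. by case: Hstl => _ []. Qed.

Lemma brDl x y z : br (x + y) z = br x z + br y z.
Proof. by have := (Hleib.1.1 1 x y z); rewrite !scale1r. Qed.
Lemma brDr x y z : br z (x + y) = br z x + br z y.
Proof. by have := (Hleib.1.2 1 x y z); rewrite !scale1r. Qed.
Lemma br0l z : br 0 z = 0.
Proof. by apply: (addrI (br 0 z)); rewrite addr0 -brDl addr0. Qed.
Lemma br0r z : br z 0 = 0.
Proof. by apply: (addrI (br z 0)); rewrite addr0 -brDr addr0. Qed.
Lemma brZl k x z : br (k *: x) z = k *: br x z.
Proof. by have := (Hleib.1.1 k x 0 z); rewrite !addr0 br0l addr0. Qed.
Lemma brZr k x z : br z (k *: x) = k *: br z x.
Proof. by have := (Hleib.1.2 k x 0 z); rewrite !addr0 br0r addr0. Qed.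
Lemma brNl x z : br (- x) z = - br x z.
Proof. by rewrite -scaleN1r brZl scaleN1r. Qed.
Lemma brNr x z : br z (- x) = - br z x.
Proof. by rewrite -scaleN1r brZr scaleN1r. Qed.
Lemma Hj x y z : br x (br y z) = br (br x y) z - br (br x z) y.
Proof. exact: Hleib.2. Qed.
Lemma Der x y z : br (br x y) z = br x (br y z) + br (br x z) y.
Proof. by rewrite Hj subrK. Qed.
Lemma br_suml (I : Type) (r : seq I) (P : pred I) (F : I -> L) z :
  br (\sum_(i <- r | P i) F i) z = \sum_(i <- r | P i) br (F i) z.
Proof. by elim/big_rec2: _ => [|i a b _ <-]; [exact: br0l | exact: brDl]. Qed.
Lemma br_sumr (I : Type) (r : seq I) (P : pred I) (F : I -> L) z :
  br z (\sum_(i <- r | P i) F i) = \sum_(i <- r | P i) br z (F i).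
Proof. by elim/big_rec2: _ => [|i a b _ <-]; [exact: br0r | exact: brDr]. Qed.

Lemma XZD i j k1 k2 a b : i != j -> X i j (k1 *: a + k2 *: b) = k1 *: X i j a + k2 *: X i j b.
Proof. by move=> ij; apply: Hst.1. Qed.
Lemma X0 i j : i != j -> X i j 0 = 0.
Proof. by move=> ij; have := XZD i j 0 0 0 0 ij; rewrite !scale0r !addr0. Qed.
Lemma XD i j a b : i != j -> X i j (a + b) = X i j a + X i j b.
Proof. by move=> ij; have := XZD i j 1 1 a b ij; rewrite !scale1r. Qed.
Lemma XZ i j k a : i != j -> X i j (k *: a) = k *: X i j a.
Proof. by move=> ij; have := XZD i j k 0 a 0 ij; rewrite !scale0r !addr0. Qed.
Lemma XN i j a : i != j -> X i j (- a) = - X i j a.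
Proof. by move=> ij; rewrite -[- a]scaleN1r XZ // scaleN1r. Qed.
Lemma R2 i j k a b : i != j -> j != k -> i != k -> br (X i j a) (X j k b) = X i k (a * b).
Proof. exact: Hst.2.1. Qed.
Lemma R3 i j k a b : i != j -> j != k -> i != k -> br (X i j a) (X k i b) = X k j (- (b * a)).
Proof. by move=> *; rewrite XN ?Hst.2.2.1 // eq_sym. Qed.
Lemma R4 i j k l a b : i != j -> k != l -> j != k -> i != l -> br (X i j a) (X k l b) = 0.
Proof. exact: Hst.2.2.2. Qed.

Lemma third (k l : 'I_n) : exists m : 'I_n, (m != k) && (m != l).
Proof.
have p0 : (0 < n)%N by apply: leq_trans Hn.
have p1 : (1 < n)%N by apply: leq_trans Hn.
have p2 : (2 < n)%N by apply: leq_trans Hn.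
case E0: ((Ordinal p0 != k) && (Ordinal p0 != l)); first by exists (Ordinal p0).
case E1: ((Ordinal p1 != k) && (Ordinal p1 != l)); first by exists (Ordinal p1).
case E2: ((Ordinal p2 != k) && (Ordinal p2 != l)); first by exists (Ordinal p2).
exfalso; move: E0 E1 E2; rewrite -!val_eqE /=; lia.
Qed.

Lemma key_gen k l i j a b c : k != l -> i != j -> ~~ ((i == l) && (j == k)) -> ~~ ((i == k) && (j == l)) ->
  exists u, br (br (X k l a) (X l k b)) (X i j c) = X i j u.
Proof.
move=> kl ij n1 n2; rewrite Der.
have lk : l != k by rewrite eq_sym.
have [/eqP il|il] := boolP (i == l).
{ subst i; have jk : j != k by move: n1; rewrite eqxx.
  have kj : k != j by rewrite eq_sym.
  have jl : j != l by rewrite eq_sym.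
  rewrite (R4 l k l j b c) // br0r add0r (R2 k l j a c) // (R3 k j l _ b) //.
  by eexists. }
have [/eqP ik|ik] := boolP (i == k).
{ subst i; have jl : j != l by move: n2; rewrite eqxx.
  have lj : l != j by rewrite eq_sym.
  have kj : k != j by [].
  rewrite (R2 l k j b c) // (R2 k l j a) // (R4 k l k j a c) // br0l addr0.
  by eexists. }
have li : l != i by rewrite eq_sym.
have ki : k != i by rewrite eq_sym.
have [/eqP jk|jk] := boolP (j == k).
{ subst j; have ik' : i != k by []. 
  rewrite (R4 l k i k b c) // br0r add0r (R3 k l i a c) // (R2 i l k _ b) //.
  by eexists. }
have [/eqP jl|jl] := boolP (j == l).
{ subst j; rewrite (R3 l k i b c) // (R3 k l i a) // (R4 k l i l a c) // br0l addr0.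
  by eexists. }
have kj : k != j by rewrite eq_sym.
have lj : l != j by rewrite eq_sym.
rewrite (R4 l k i j b c) // (R4 k l i j a c) // br0r br0l addr0.
by exists 0; rewrite X0.
Qed.

Lemma key k l i j a b c : k != l -> i != j ->
  exists u, br (br (X k l a) (X l k b)) (X i j c) = X i j u.
Proof.
move=> kl ij.
have lk : l != k by rewrite eq_sym.
have [m /andP[mk ml]] := third k l.
have km : k != m by rewrite eq_sym. have lm : l != m by rewrite eq_sym.
have F := (negbTE mk, negbTE ml, negbTE kl, negbTE lk, negbTE km, negbTE lm).
case/boolP: ((i == l) && (j == k)) => [/andP[/eqP -> /eqP ->]|n1].
  rewrite -[c]mulr1 -(R2 l m k c 1) // Hj.
  have h1 : ~~ ((l == l) && (m == k)) by rewrite F andbF.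
  have h2 : ~~ ((l == k) && (m == l)) by rewrite F.
  have h3 : ~~ ((m == l) && (k == k)) by rewrite F.
  have h4 : ~~ ((m == k) && (k == l)) by rewrite F.
  have [u ->] := key_gen k l l m a b c kl lm h1 h2.
  have [v ->] := key_gen k l m k a b 1 kl mk h3 h4.
  rewrite (R2 l m k u 1) // (R3 m k l v c) // -XN // -XD //.
  by eexists.
case/boolP: ((i == k) && (j == l)) => [/andP[/eqP -> /eqP ->]|n2]; last exact: key_gen.
rewrite -[c]mulr1 -(R2 k m l c 1) // Hj.
have h1 : ~~ ((k == l) && (m == k)) by rewrite F.
have h2 : ~~ ((k == k) && (m == l)) by rewrite F andbF.
have h3 : ~~ ((m == l) && (l == k)) by rewrite F.
have h4 : ~~ ((m == k) && (l == l)) by rewrite F.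
have [u ->] := key_gen k l k m a b c kl km h1 h2.
have [v ->] := key_gen k l m l a b 1 kl ml h3 h4.
rewrite (R2 k m l u 1) // (R3 m l k v c) // -XN // -XD //.
by eexists.
Qed.


Lemma H0 : in_H br X 0.
Proof. by exists [::]; split => //; rewrite big_nil. Qed.
Lemma Hlin k x y : in_H br X x -> in_H br X y -> in_H br X (k *: x + y).
Proof.
move=> [s1 [h1 ->]] [s2 [h2 ->]].
exists (map (fun t => (k * t.1.1, t.1.2, t.2)) s1 ++ s2); split.
  by move=> t; rewrite mem_cat => /orP[/mapP[t' /h1 ? ->]|/h2].
rewrite big_cat big_map scaler_sumr /=; congr (_ + _); apply: eq_bigr => t _.
by rewrite scalerA.
Qed.
Lemma Hgen i j a b : i != j -> in_H br X (br (X i j a) (X j i b)).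
Proof.
move=> ij; exists [:: (1, (i, j), (a, b))]; split.
  by move=> t; rewrite inE => /eqP ->.
by rewrite big_seq1 scale1r.
Qed.
Lemma Hact i j h a : i != j -> in_H br X h -> exists b, br h (X i j a) = X i j b.
Proof.
move=> ij [s [hs ->]]; rewrite br_suml.
elim: s hs => [|t s IH] hs; first by exists 0; rewrite big_nil X0.
rewrite big_cons brZl.
have [u ->] := key t.1.2.1 t.1.2.2 i j t.2.1 t.2.2 a (hs t (mem_head _ _)) ij.
have [|v ->] := IH.
  by move=> t' ht'; apply: hs; rewrite inE ht' orbT.
by exists (t.1.1 *: u + v); rewrite XD // XZ.
Qed.
Lemma Hbr x y : in_H br X x -> in_H br X y -> in_H br X (br x y).
Proof.
move=> hx [s [hs ->]]; rewrite br_sumr.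
elim: s hs => [|t s IH] hs; first by rewrite big_nil; exact: H0.
rewrite big_cons brZr; apply: Hlin; last by apply: IH => t' ht'; apply: hs; rewrite inE ht' orbT.
have ij := hs t (mem_head _ _).
have ji : t.1.2.2 != t.1.2.1 by rewrite eq_sym.
rewrite Hj.
have [u ->] := Hact _ _ _ t.2.1 ij hx.
have [v ->] := Hact _ _ _ t.2.2 ji hx.
rewrite -[_ - _]addrC -scaleN1r.
by apply: Hlin; apply: Hgen.
Qed.

Definition sX (a : 'I_n * 'I_n -> R) := \sum_(p : 'I_n * 'I_n | p.1 != p.2) X p.1 p.2 (a p).
Definition S x := exists h a, in_H br X h /\ x = h + sX a.

Lemma sX0 : sX (fun _ => 0) = 0.
Proof. by rewrite /sX big1 // => p hp; exact: X0. Qed.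
Lemma S0 : S 0.
Proof. by exists 0, (fun _ => 0); split; [exact: H0 | rewrite sX0 addr0]. Qed.
Lemma Slin k x y : S x -> S y -> S (k *: x + y).
Proof.
move=> [h [a [hh ->]]] [h' [a' [hh' ->]]].
exists (k *: h + h'), (fun p => k *: a p + a' p); split; first exact: Hlin.
have -> : sX (fun p => k *: a p + a' p) = k *: sX a + sX a'.
  rewrite /sX scaler_sumr -big_split; apply: eq_bigr => p hp; by rewrite XD // XZ.
by rewrite scalerDr addrACA.
Qed.
Lemma Sadd x y : S x -> S y -> S (x + y).
Proof. by move=> hx hy; rewrite -[x]scale1r; apply: Slin. Qed.
Lemma Sscale k x : S x -> S (k *: x).
Proof. by move=> hx; rewrite -[_ *: _]addr0; apply: Slin => //; exact: S0. Qed.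
Lemma Ssub x y : S x -> S y -> S (x - y).
Proof. by move=> hx hy; rewrite -scaleN1r addrC; apply: Slin. Qed.
Lemma Ssum (I : Type) (r : seq I) (P : pred I) (F : I -> L) :
  (forall i, P i -> S (F i)) -> S (\sum_(i <- r | P i) F i).
Proof. by move=> hF; apply: big_ind => //; [exact: S0 | exact: Sadd]. Qed.
Lemma SH h : in_H br X h -> S h.
Proof. by move=> hh; exists h, (fun _ => 0); split => //; rewrite sX0 addr0. Qed.
Lemma SX i j b : i != j -> S (X i j b).
Proof.
move=> ij; exists 0, (fun p => if p == (i, j) then b else 0); split; first exact: H0.
rewrite add0r /sX (bigD1 (i, j)) //= eqxx big1 ?addr0 // => p /andP[hp hne].
by rewrite (negbTE hne) X0.
Qed.
Lemma SXX p q r s a c : p != q -> r != s -> S (br (X p q a) (X r s c)).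
Proof.
move=> pq rs.
have [/eqP qr|qr] := boolP (q == r).
  subst r; have [/eqP ps|ps] := boolP (p == s).
    by subst s; apply: SH; apply: Hgen.
  by rewrite (R2 p q s) //; apply: SX.
have [/eqP ps|ps] := boolP (p == s).
  subst s; have rq : r != q by rewrite eq_sym.
  have pr : p != r by rewrite eq_sym.
  by rewrite (R3 p q r) //; apply: SX.
by rewrite (R4 p q r s) //; exact: S0.
Qed.
Lemma Sright x i j c : i != j -> S x -> S (br x (X i j c)).
Proof.
move=> ij [h [a [hh ->]]]; rewrite brDl; apply: Sadd.
  by have [b ->] := Hact _ _ _ c ij hh; apply: SX.
by rewrite /sX br_suml; apply: Ssum => p hp; apply: SXX.
Qed.
Lemma SXH p q a h : p != q -> in_H br X h -> S (br (X p q a) h).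
Proof.
move=> pq [s [hs ->]]; rewrite br_sumr big_seq; apply: Ssum => t ht; rewrite brZr; apply: Sscale.
have ij := hs t ht.
have ji : t.1.2.2 != t.1.2.1 by rewrite eq_sym.
by rewrite Hj; apply: Ssub; apply: Sright => //; apply: SXX.
Qed.
Lemma Sbr x y : S x -> S y -> S (br x y).
Proof.
move=> hx [h' [a' [hh' ->]]]; rewrite brDr; apply: Sadd.
  case: hx => [h [a [hh ->]]]; rewrite brDl; apply: Sadd; first exact/SH/Hbr.
  by rewrite /sX br_suml; apply: Ssum => p hp; apply: SXH.
by rewrite /sX br_sumr; apply: Ssum => p hp; apply: Sright.
Qed.

Definition Sb : {pred L} := fun x => if excluded_middle_informative (S x) then true else false.
Lemma SbP x : x \in Sb <-> S x.
Proof. rewrite unfold_in /Sb; case: excluded_middle_informative => //. Qed.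
Fact Sb_closed : submod_closed Sb.
Proof.
split; first by apply/SbP; exact: S0.
by move=> k u v /SbP hu /SbP hv; apply/SbP; apply: Slin.
Qed.
HB.instance Definition _ := GRing.isSubmodClosed.Build K L Sb Sb_closed.
Inductive Tsub : predArgType := TSub (x : L) of x \in Sb.
Definition tval u := let: TSub x _ := u in x.
HB.instance Definition _ := [isSub of Tsub for tval].
HB.instance Definition _ := [Choice of Tsub by <:].
HB.instance Definition _ := [SubChoice_isSubZmodule of Tsub by <:].
HB.instance Definition _ := [SubZmodule_isSubLmodule of Tsub by <:].

Definition brT (u v : Tsub) : Tsub := insubd 0 (br (val u) (val v)).
Lemma brTE u v : val (brT u v) = br (val u) (val v).
Proof.
rewrite val_insubd; case: ifP => // /negP []; apply/SbP; apply: Sbr; apply/SbP; exact: valP.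
Qed.
Definition Y i j a : Tsub := insubd 0 (X i j a).
Lemma YE i j a : i != j -> val (Y i j a) = X i j a.
Proof. by move=> ij; rewrite val_insubd; case: ifP => // /negP []; apply/SbP; apply: SX. Qed.
Lemma valkD k (u v : Tsub) : val (k *: u + v) = k *: val u + val v.
Proof. by rewrite GRing.valD GRing.valZ. Qed.
Lemma leibT : leibniz_algebra brT.
Proof.
split. split.
  move=> k x y z. apply/val_inj. by rewrite !(brTE, valkD) ?brTE; apply: Hleib.1.1.
  move=> k x y z. apply/val_inj. by rewrite !(brTE, valkD) ?brTE; apply: Hleib.1.2.
move=> x y z; apply/val_inj; rewrite GRing.valB !brTE; exact: Hj.
Qed.
Lemma stT : steinberg_rel brT Y.
Proof.
split.
  move=> i j k1 k2 a b ij; apply/val_inj.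
  by rewrite YE // XZD // GRing.valD !GRing.valZ !YE.
split.
  by move=> i j k a b ij jk ik; apply/val_inj; rewrite brTE !YE // R2.
split.
  move=> i j k a b ij jk ik; have kj : k != j by rewrite eq_sym.
  have ki : k != i by rewrite eq_sym.
  apply/val_inj; rewrite brTE GRing.valN !YE //.
  exact: Hst.2.2.1.
by move=> i j k l a b ij kl jk il; apply/val_inj; rewrite brTE !YE // R4.
Qed.

Lemma gen x : S x.
Proof.
have [[f [[fl fb] fX]] _] := Hstl.2.2 Tsub brT Y leibT stT.
have [_ uniq] := Hstl.2.2 L br X Hleib Hst.
have E : forall x, val (f x) = x.
  move=> y; apply: (uniq (fun x => val (f x)) id).
  - by split => [k u v|u v]; rewrite ?fl ?fb ?valkD ?brTE.
  - by [].
  - by move=> i j a ij; rewrite fX // YE.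
  - by [].
by rewrite -(E x); apply/SbP; exact: valP.
Qed.
Local Notation Mf := {ffun 'I_n * 'I_n -> R}.

Lemma main_res :
  ((in_H br X 0 /\
    (forall (k : K) (x y : L), in_H br X x -> in_H br X y -> in_H br X (k *: x + y)) /\
    (forall x y : L, in_H br X x -> in_H br X y -> in_H br X (br x y))) /\
   (forall z : L, in_center br z -> in_H br X z) /\
   (forall (i j : 'I_n) (h : L) (a : R), i != j -> in_H br X h ->
      exists b : R, br h (X i j a) = X i j b) /\
   (forall x : L, exists (h : L) (a : 'I_n * 'I_n -> R), in_H br X h /\
      x = h + \sum_(p : 'I_n * 'I_n | p.1 != p.2) X p.1 p.2 (a p)) /\
   (forall (h : L) (a : 'I_n * 'I_n -> R), in_H br X h ->
      h + \sum_(p : 'I_n * 'I_n | p.1 != p.2) X p.1 p.2 (a p) = 0 ->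
      h = 0 /\ forall p : 'I_n * 'I_n, p.1 != p.2 -> X p.1 p.2 (a p) = 0)).
Proof.
have [[f [[fl fb] fX]] _] := Hstl.2.2 Mf (@brM K R n) (@Ym K R n) (leibM K R n) (stM K R n).
have f0 : f 0 = 0.
  have := fl 1 0 0; rewrite !scale1r !addr0 => e. by apply: (addrI (f 0)); rewrite addr0 -e.
have fD x y : f (x + y) = f x + f y by rewrite -{1}(scale1r x) fl scale1r.
have fZ k x : f (k *: x) = k *: f x by rewrite -[_ *: x]addr0 fl f0 addr0.
have fsum (I : Type) (r : seq I) (P : pred I) (F : I -> L) :
    f (\sum_(i <- r | P i) F i) = \sum_(i <- r | P i) f (F i).
  by elim/big_rec2: _ => [|i u v _ <-]; [exact: f0 | exact: fD].
have offd h p : in_H br X h -> p.1 != p.2 -> f h p = 0.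
  move=> [s [hs ->]] hp; rewrite fsum sum_ffunE big1_seq // => t /andP[_ ht].
  rewrite fZ fb !fX ?hs // ?(eq_sym t.1.2.2) ?hs // ffunE brME subE prodY_l prodY_r !ffunE !xpair_eqE.
  case: p hp => p1 p2 /= hp.
  case: (p2 =P t.1.2.1) => [e2|_]; last first.
    case: (p1 =P t.1.2.2) => [<-|_]; last by rewrite subr0 scaler0.
    by rewrite eqxx (eq_sym p2) (negbTE hp) /= mulr0 subr0 scaler0.
  subst p2; rewrite (negbTE hp) /= mul0r sub0r.
  case: (p1 == t.1.2.2); rewrite ?oppr0 ?scaler0 //.
  by rewrite eqxx /= (negbTE (hs t ht)) mulr0 oppr0 scaler0.
have fsX (a : 'I_n * 'I_n -> R) q : q.1 != q.2 -> f (sX a) q = a q.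
  move=> hq; rewrite /sX fsum sum_ffunE (bigD1 q) //= big1 ?addr0.
    by rewrite fX // ffunE -surjective_pairing eqxx.
  move=> p /andP[hp hpq]; rewrite fX // ffunE -surjective_pairing.
  by rewrite eq_sym (negbTE hpq).
split.
  split; first exact: H0.
  by split; [exact: Hlin | exact: Hbr].
split.
  move=> z hz; have [h [a [hh E]]] := gen z.
  suff a0 : forall q : 'I_n * 'I_n, q.1 != q.2 -> a q = 0.
    rewrite E /sX big1 ?addr0 // => q hq; by rewrite a0 // X0.
  move=> [p r] /= pr.
  have [s /andP[sr _]] := third r r.
  have rs : r != s by rewrite eq_sym.
  have := f_equal (fun M : Mf => M (p, s)) (f_equal f (hz (X r s 1)).1).
  rewrite fb fX // f0 ffunE /= subE prodY_l prodY_r eqxx (negbTE pr) mulr1 subr0.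
  by rewrite E fD ffunE offd // fsX // add0r ffunE.
split.
  by move=> i j h a ij hh; exact: Hact.
split.
  move=> x; have [h [a [hh E]]] := gen x.
  by exists h, a; split.
move=> h a hh E; rewrite -/(sX a) in E.
have a0 : forall q : 'I_n * 'I_n, q.1 != q.2 -> a q = 0.
  move=> q hq; have := f_equal (fun M : Mf => M q) (f_equal f E).
  by rewrite f0 fD ffunE offd // fsX // add0r ffunE.
have sX0' : sX a = 0 by rewrite /sX big1 // => q hq; rewrite a0 // X0.
split; first by move: E; rewrite sX0' addr0.
by move=> p hp; rewrite a0 // X0.
Qed.
End Stl.

Theorem lemma2p5 (K : comPzRingType) (R : algType K) (n : nat)
    (L : lmodType K) (br : L -> L -> L) (X : 'I_n -> 'I_n -> R -> L) :
  (3 <= n)%N ->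
  free_with_basis_one R ->
  is_stl br X ->
  ((in_H br X 0 /\
    (forall (k : K) (x y : L), in_H br X x -> in_H br X y -> in_H br X (k *: x + y)) /\
    (forall x y : L, in_H br X x -> in_H br X y -> in_H br X (br x y))) /\
   (forall z : L, in_center br z -> in_H br X z) /\
   (forall (i j : 'I_n) (h : L) (a : R), i != j -> in_H br X h ->
      exists b : R, br h (X i j a) = X i j b) /\
   (forall x : L, exists (h : L) (a : 'I_n * 'I_n -> R), in_H br X h /\
      x = h + \sum_(p : 'I_n * 'I_n | p.1 != p.2) X p.1 p.2 (a p)) /\
   (forall (h : L) (a : 'I_n * 'I_n -> R), in_H br X h ->
      h + \sum_(p : 'I_n * 'I_n | p.1 != p.2) X p.1 p.2 (a p) = 0 ->
      h = 0 /\ forall p : 'I_n * 'I_n, p.1 != p.2 -> X p.1 p.2 (a p) = 0)).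
Proof. by move=> Hn _ Hstl; exact: main_res. Qed.
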